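(* Let $E: y^2=x^3+Ax+B$ ($A,B\in\mathbb{Z}$) be an elliptic curve over $\mathbb{Q}$ and let $M$ be a positive integer with $\max\{10\sqrt{|A|},5\sqrt[3]{|B|}\}\le M$. There exists $D_0$ depending only on $E$ (and $M$) such that for every squarefree integer $D\ge D_0$ and every point $P\in E_D(\mathbb{Z})$ with $x(P)\le MD$, where $E_D: y^2=x^3+D^2Ax+D^3B$, we have $\hat h(P)<1.5\log D$.
   Context: $h$ is the absolute logarithmic Weil height on $\overline{\mathbb{Q}}$; for a point $P$ on an elliptic curve in Weierstrass form, $\hat h(P)=\lim_{n\to\infty} h(x(2^nP))/4^n$ (the canonical height, not normalized by the factor $1/2$). $E_D(\mathbb{Z})$ is the set of points of $E_D$ with integer coordinates. *)

(* Defs.v *)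
From HB Require Import structures.
From mathcomp Require Import all_boot all_order all_algebra.
From mathcomp Require Import all_classical all_reals all_analysis.
Set Implicit Arguments. Unset Strict Implicit. Unset Printing Implicit Defensive.
Import Order.TTheory GRing.Theory Num.Theory.
Import numFieldNormedType.Exports.
Local Open Scope ring_scope.

Definition weil_height_rat (R : realType) (r : rat) : R :=
  ln ((Num.max `|numq r| (denq r))%:~R).

(* Points of y^2 = x^3 + a x + b over Q: None is the point at infinity O. *)
Definition ec_point := option (rat * rat).

Definition ec_double (a b : rat) (P : ec_point) : ec_point :=
  match P with
  | None => None
  | Some (x, y) =>
      if y == 0 then None
      else let l := (3 * x ^+ 2 + a) / (2 * y) in
           let x' := l ^+ 2 - 2 * x in
           Some (x', l * (x - x') - y)
  end.

Definition height_x (R : realType) (P : ec_point) : R :=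
  match P with None => 0 | Some (x, _) => weil_height_rat R x end.

(* Canonical height  hat h(P) = lim_{n -> oo} h(x(2^n P)) / 4^n
   (not normalized by 1/2). *)
Definition canonical_height (R : realType) (a b : rat) (P : ec_point) : R :=
  limn (fun n : nat => height_x R (iter n (ec_double a b) P) / 4%:R ^+ n).

Definition squarefree_int (D : int) : Prop :=
  forall d : int, (d * d %| D)%Z -> `|d| = 1.

(* Main.v *)
Require Import Defs.
From HB Require Import structures.
From mathcomp Require Import all_boot all_order all_algebra.
From mathcomp Require Import all_classical all_reals all_analysis.
From mathcomp Require Import ring lra zify.
Import Order.TTheory GRing.Theory Num.Theory.
Import numFieldNormedType.Exports.
Local Open Scope ring_scope.
Local Open Scope classical_set_scope.
Lemma ncvg0 (R : realType) (f : nat -> R) : ~ cvg (f @ \oo) -> limn f = 0.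
Proof. move=> h; rewrite /lim /lim_in getPN //. move=> l hl; apply: h. by apply/cvg_ex; exists l. Qed.

Lemma lim_bound (R : realType) (s : nat -> R) (T L : R) :
  (forall n, s n <= T + L * (4^-1) ^+ n) -> 0 <= T -> limn s <= T.
Proof.
move=> hs T0.
case: (pselect (cvg (s @ \oo))) => hc; last by rewrite ncvg0.
have hg : (fun n => T + geometric L (4^-1 : R) n) @ \oo --> T.
  rewrite -[X in _ --> X]addr0; apply: cvgD; first exact: cvg_cst.
  apply: cvg_geometric; rewrite ger0_norm ?invr_ge0 ?ler0n //.
  by rewrite invf_lt1 ?ltr0n // ltr1n.
rewrite -(cvg_lim _ hg) //; apply: ler_lim => //; first by apply/cvg_ex; exists T.
by near=> n; apply: hs.
Unshelve. all: by end_near. Qed.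
Definition Hq (r : rat) : int := Num.max `|numq r| (denq r).

Lemma Hq_ge1 r : 1 <= Hq r.
Proof. rewrite /Hq le_max; apply/orP; right; exact: denq_gt0. Qed.

Lemma Hq_div (n d : int) : d != 0 -> Hq (n%:~R / d%:~R) <= Num.max `|n| `|d|.
Proof.
move=> d0; case: divqP => [hd|k x k0]; first by move: d0; rewrite hd eqxx.
have k1 : 1 <= `|k| by rewrite -gtz0_ge1 normr_gt0.
rewrite /Hq; apply: le_max2.
  by rewrite normrM ler_peMl.
by rewrite normrM normr_denq ler_peMl // ltW // denq_gt0.
Qed.

Lemma Hq_mulz (D : int) r : D != 0 -> Hq (D%:~R * r) <= `|D| * Hq r.
Proof.
move=> D0.
have -> : (D%:~R * r = (D * numq r)%:~R / (denq r)%:~R :> rat).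
  by rewrite -{1}(divq_num_den r) intrM mulrA.
apply: (le_trans (@Hq_div (D * numq r) (denq r) (denq_neq0 r))).
rewrite /Hq ge_max !normrM normr_denq.
have Dp : 0 < `|D| by rewrite normr_gt0.
apply/andP; split; first by rewrite ler_pM2l // le_max lexx.
apply: (le_trans (y := Num.max `|numq r| (denq r))); first by rewrite le_max lexx orbT.
by rewrite ler_peMl // ?(le_trans _ (Hq_ge1 r)) // -gtz0_ge1.
Qed.

Lemma mono_bound (a b H : int) (i j : nat) : `|a| <= H -> `|b| <= H ->
  `|a ^+ i * b ^+ j| <= H ^+ (i + j).
Proof.
move=> ha hb; rewrite normrM !normrX exprD.
by apply: ler_pM; rewrite ?exprn_ge0 ?normr_ge0 // lerXn2r // ?nnegrE ?normr_ge0 // (le_trans _ ha).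
Qed.

Lemma boundN (A B p q H : int) : `|p| <= H -> `|q| <= H ->
  `|p ^+ 4 - 2 * A * p ^+ 2 * q ^+ 2 - 8 * B * p * q ^+ 3 + A ^+ 2 * q ^+ 4|
  <= 4 * (1 + 2 * `|A| + 8 * `|B| + A ^+ 2) * H ^+ 4.
Proof.
move=> hp hq.
have h1 := @mono_bound p q H 4 0 hp hq.
have h2 := @mono_bound p q H 2 2 hp hq.
have h3 := @mono_bound p q H 1 3 hp hq.
have h4 := @mono_bound p q H 0 4 hp hq.
move: h1 h2 h3 h4; rewrite !expr0 !mulr1 !mul1r !expr1 /=.
set X := H ^+ 4. move=> h1 h2 h3 h4.
have X0 : 0 <= X by apply: le_trans (normr_ge0 _) h4.

have e : p ^+ 4 - 2 * A * p ^+ 2 * q ^+ 2 - 8 * B * p * q ^+ 3 + A ^+ 2 * q ^+ 4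
   = p ^+ 4 + (- (2 * A) * (p ^+ 2 * q ^+ 2) + (- (8 * B) * (p * q ^+ 3) + A ^+ 2 * q ^+ 4)).
  by ring.
rewrite e.
set m1 := p ^+ 4. set m2 := p ^+ 2 * q ^+ 2. set m3 := p * q ^+ 3. set m4 := q ^+ 4.
apply: (le_trans (ler_normD _ _)).
apply: (le_trans (lerD (lexx _) (ler_normD _ _))).
apply: (le_trans (lerD (lexx _) (lerD (lexx _) (ler_normD _ _)))).
have hA := normr_ge0 A. have hB := normr_ge0 B.
set A2 := A ^+ 2.
have hA2 : 0 <= A2 by rewrite sqr_ge0.
have g1 : `|m1| <= X := h1. have g2 : `|m2| <= X := h2.
have g3 : `|m3| <= X := h3. have g4 : `|m4| <= X := h4.
clearbody m1 m2 m3 m4 A2 X.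
rewrite !normrM !normrN !normrM (ger0_norm (ler0n _ 2)) (ger0_norm (ler0n _ 8)) (ger0_norm hA2).
apply: (le_trans (y := X + (2 * `|A| * X + (8 * `|B| * X + A2 * X)))).
  apply: lerD => //; apply: lerD; first by rewrite ler_wpM2l // mulr_ge0.
  by apply: lerD; rewrite ler_wpM2l // mulr_ge0.
have -> : X + (2 * `|A| * X + (8 * `|B| * X + A2 * X)) = (1 + 2 * `|A| + 8 * `|B| + A2) * X by ring.
rewrite -mulrA ler_peMl // ?mulr_ge0 // ?addr_ge0 // ?mulr_ge0 //.
Qed.

Lemma boundD (A B p q H : int) : `|p| <= H -> `|q| <= H ->
  `|4 * q * (p ^+ 3 + A * p * q ^+ 2 + B * q ^+ 3)|
  <= 4 * (1 + 2 * `|A| + 8 * `|B| + A ^+ 2) * H ^+ 4.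
Proof.
move=> hp hq.
have h1 := @mono_bound p q H 3 1 hp hq.
have h3 := @mono_bound p q H 1 3 hp hq.
have h4 := @mono_bound p q H 0 4 hp hq.
move: h1 h3 h4; rewrite !expr0 !mul1r !expr1 /=.
set X := H ^+ 4. move=> h1 h3 h4.
have X0 : 0 <= X by apply: le_trans (normr_ge0 _) h4.

have e : 4 * q * (p ^+ 3 + A * p * q ^+ 2 + B * q ^+ 3)
   = 4 * (p ^+ 3 * q) + ((4 * A) * (p * q ^+ 3) + (4 * B) * q ^+ 4).
  by ring.
rewrite e.
set m1 := p ^+ 3 * q. set m3 := p * q ^+ 3. set m4 := q ^+ 4.
apply: (le_trans (ler_normD _ _)).
apply: (le_trans (lerD (lexx _) (ler_normD _ _))).
have g1 : `|m1| <= X := h1.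
have g3 : `|m3| <= X := h3. have g4 : `|m4| <= X := h4.
clearbody m1 m3 m4 X.
rewrite !normrM (ger0_norm (ler0n _ 4)).
have hA := normr_ge0 A. have hB := normr_ge0 B.
set A2 := A ^+ 2.
have hA2 : 0 <= A2 by rewrite sqr_ge0.
clearbody A2.
apply: (le_trans (y := 4 * X + (4 * `|A| * X + 4 * `|B| * X))).
  apply: lerD; first by rewrite ler_wpM2l.
  by apply: lerD; rewrite ler_wpM2l // mulr_ge0.
have -> : 4 * X + (4 * `|A| * X + 4 * `|B| * X) = 4 * (1 + `|A| + `|B|) * X by ring.
rewrite ler_wpM2r // ler_wpM2l // -!addrA lerD // lerD //.
  by rewrite ler_peMl // ler1n.
by apply: (le_trans (y := 8 * `|B|)); [rewrite ler_peMl // ler1n | rewrite lerDl].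
Qed.

Definition phi (A B u : rat) : rat :=
  (u ^+ 4 - 2 * A * u ^+ 2 - 8 * B * u + A ^+ 2) / (4 * (u ^+ 3 + A * u + B)).

Lemma double_step (a b xr yr : rat) : yr != 0 ->
  yr ^+ 2 = xr ^+ 3 + a * xr + b ->
  let l := (3 * xr ^+ 2 + a) / (2 * yr) in
  let x' := l ^+ 2 - 2 * xr in
  (l * (xr - x') - yr) ^+ 2 = x' ^+ 3 + a * x' + b.
Proof.
move=> y0 hy l x'.
have hb : b = yr ^+ 2 - xr ^+ 3 - a * xr by rewrite hy; ring.
rewrite hb /x' /l; field.
exact: y0.
Qed.

Lemma double_phi (A B D xr yr : rat) : D != 0 -> yr != 0 ->
  yr ^+ 2 = xr ^+ 3 + D ^+ 2 * A * xr + D ^+ 3 * B ->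
  let l := (3 * xr ^+ 2 + D ^+ 2 * A) / (2 * yr) in
  (xr / D) ^+ 3 + A * (xr / D) + B != 0 /\
  (l ^+ 2 - 2 * xr) / D = phi A B (xr / D).
Proof.
move=> D0 y0 hy l.
have hf : (xr / D) ^+ 3 + A * (xr / D) + B = yr ^+ 2 / D ^+ 3.
  rewrite hy; field; exact: D0.
split; first by rewrite hf mulf_neq0 ?invr_eq0 ?expf_neq0.
rewrite /phi /l.
have hb : B = yr ^+ 2 / D ^+ 3 - (xr / D) ^+ 3 - A * (xr / D) by rewrite -hf; ring.
rewrite hb; field.
have e : xr ^+ 3 + A * xr * D ^+ 2 + (yr ^+ 2 - xr ^+ 3 + - (A * xr) * D ^+ 2) = yr ^+ 2 by ring.
by rewrite e D0 y0 expf_neq0.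
Qed.

Lemma phi_frac (A B : int) (u : rat) :
  u ^+ 3 + A%:~R * u + B%:~R != 0 ->
  let p := numq u in let q := denq u in
  phi A%:~R B%:~R u =
  (p ^+ 4 - 2 * A * p ^+ 2 * q ^+ 2 - 8 * B * p * q ^+ 3 + A ^+ 2 * q ^+ 4)%:~R /
  (4 * q * (p ^+ 3 + A * p * q ^+ 2 + B * q ^+ 3))%:~R.
Proof.
move=> fu p q.
have q0 : (q%:~R : rat) != 0 by rewrite intr_eq0 denq_neq0.
have hu : u = p%:~R / q%:~R by rewrite divq_num_den.
rewrite /phi; move: fu; rewrite hu => fu.
rewrite !(rmorphD, rmorphB, rmorphM, rmorphXn, rmorphN) /=.
have hD : (p%:~R ^+ 3 + A%:~R * p%:~R * q%:~R ^+ 2 + B%:~R * q%:~R ^+ 3 : rat) != 0.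
  have e : (p%:~R ^+ 3 + A%:~R * p%:~R * q%:~R ^+ 2 + B%:~R * q%:~R ^+ 3 : rat)
    = q%:~R ^+ 3 * ((p%:~R / q%:~R) ^+ 3 + A%:~R * (p%:~R / q%:~R) + B%:~R).
    by field.
  by rewrite e mulf_neq0 ?expf_neq0.
field.
by apply/andP; split; [exact: hD | exact: q0].
Qed.

Definition Cst (A B : int) : int := 4 * (1 + 2 * `|A| + 8 * `|B| + A ^+ 2).

Lemma Cst_gt0 A B : 0 < Cst A B.
Proof.
rewrite /Cst mulr_gt0 // ltr_wpDr ?sqr_ge0 // ltr_wpDr ?mulr_ge0 // ltr_wpDr ?mulr_ge0 //.
Qed.

Lemma Hq_phi (A B : int) u : u ^+ 3 + A%:~R * u + B%:~R != 0 ->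
  Hq (phi A%:~R B%:~R u) <= Cst A B * Hq u ^+ 4.
Proof.
move=> fu.
rewrite (@phi_frac A B u fu).
set p := numq u. set q := denq u.
have q0 : (q%:~R : rat) != 0 by rewrite intr_eq0 denq_neq0.
have hD : (p%:~R ^+ 3 + A%:~R * p%:~R * q%:~R ^+ 2 + B%:~R * q%:~R ^+ 3 : rat) != 0.
  have e : (p%:~R ^+ 3 + A%:~R * p%:~R * q%:~R ^+ 2 + B%:~R * q%:~R ^+ 3 : rat)
    = q%:~R ^+ 3 * ((p%:~R / q%:~R) ^+ 3 + A%:~R * (p%:~R / q%:~R) + B%:~R).
    by field.
  by rewrite e mulf_neq0 ?expf_neq0 // /p /q divq_num_den.
have Dn0 : (4 * q * (p ^+ 3 + A * p * q ^+ 2 + B * q ^+ 3)) != 0.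
  rewrite -(intr_eq0 rat) !(rmorphD, rmorphM, rmorphXn) /=.
  by rewrite !mulf_neq0 // intr_eq0.
apply: (le_trans (Hq_div _ _ Dn0)).
have hp : `|p| <= Hq u by rewrite /Hq le_max lexx.
have hq : `|q| <= Hq u by rewrite /Hq normr_denq le_max lexx orbT.
by rewrite ge_max boundN // boundD.
Qed.

Lemma ln_int_le (R : realType) (m n : int) : 0 < m -> m <= n ->
  ln (m%:~R : R) <= ln (n%:~R : R).
Proof.
move=> m0 mn; rewrite ler_ln ?ler_int // posrE ltr0z //.
exact: lt_le_trans mn.
Qed.

Lemma ln_intM (R : realType) (m n : int) : 0 < m -> 0 < n ->
  ln ((m * n)%:~R : R) = ln (m%:~R : R) + ln (n%:~R : R).
Proof. by move=> m0 n0; rewrite intrM lnM // posrE ltr0z. Qed.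

Lemma ln_intX (R : realType) (m : int) k : 0 < m ->
  ln ((m ^+ k)%:~R : R) = ln (m%:~R : R) *+ k.
Proof. by move=> m0; rewrite rmorphXn lnXn // ltr0z. Qed.

Definition hh (R : realType) (r : rat) : R := ln ((Hq r)%:~R).

Lemma Hq_gt0 r : 0 < Hq r.
Proof. exact: lt_le_trans ltr01 (Hq_ge1 r). Qed.

Lemma hh_ge0 (R : realType) r : 0 <= hh R r.
Proof. by rewrite /hh ln_ge0 // ler1z Hq_ge1. Qed.

Lemma step_hh (R : realType) (A B D : int) (xr yr : rat) : D != 0 -> yr != 0 ->
  yr ^+ 2 = xr ^+ 3 + (D ^+ 2 * A)%:~R * xr + (D ^+ 3 * B)%:~R ->
  hh R ((((3 * xr ^+ 2 + (D ^+ 2 * A)%:~R) / (2 * yr)) ^+ 2 - 2 * xr) / D%:~R)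
    <= ln ((Cst A B)%:~R : R) + 4 * hh R (xr / D%:~R).
Proof.
move=> D0 y0.
have ea : ((D ^+ 2 * A)%:~R : rat) = D%:~R ^+ 2 * A%:~R by rewrite intrM rmorphXn.
have eb : ((D ^+ 3 * B)%:~R : rat) = D%:~R ^+ 3 * B%:~R by rewrite intrM rmorphXn.
rewrite ea eb => hy.
have D0' : (D%:~R : rat) != 0 by rewrite intr_eq0.
have [fu ->] := @double_phi A%:~R B%:~R D%:~R xr yr D0' y0 hy.
rewrite /hh.
apply: (le_trans (@ln_int_le R _ _ (Hq_gt0 _) (@Hq_phi A B _ fu))).
rewrite ln_intM ?Cst_gt0 ?exprn_gt0 ?Hq_gt0 // ln_intX ?Hq_gt0 //.
by rewrite mulr_natl.
Qed.

Lemma hh_mulD (R : realType) (D : int) (r : rat) : 0 < D ->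
  hh R r <= hh R (r / D%:~R) + ln (D%:~R : R).
Proof.
move=> D0.
have D0' : (D%:~R : rat) != 0 by rewrite intr_eq0 gt_eqF.
set s := r / D%:~R.
have -> : r = D%:~R * s by rewrite /s; field.
rewrite /hh addrC -ln_intM ?Hq_gt0 //.
apply: ln_int_le; first exact: Hq_gt0.
by rewrite -{2}(gtr0_norm D0); apply: Hq_mulz; rewrite gt_eqF.
Qed.

Lemma xneg (a b D t : int) : 0 < D -> 0 <= a -> 0 <= b ->
  t ^+ 3 <= D ^+ 2 * a * t + D ^+ 3 * b -> t <= (a + b + 1) * D.
Proof.
move=> D0 a0 b0 h.
rewrite leNgt; apply/negP => ht.
have tD : D < t.
  apply: le_lt_trans ht; rewrite ler_peMl ?(ltW D0) //.
  by rewrite -{1}(add0r 1) lerD // addr_ge0.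
have t0 : 0 < t by apply: lt_trans tD.
have h2 : D ^+ 3 * b <= D ^+ 2 * b * t.
  by rewrite exprSr -!mulrA ler_wpM2l ?exprn_ge0 ?(ltW D0) // ler_wpM2l ?(ltW D0) // mulrC ler_wpM2l // (ltW tD).
have h3 : (a + b + 1) * D ^+ 2 * t < t ^+ 3.
  have -> : (a + b + 1) * D ^+ 2 * t = ((a + b + 1) * D) * (D * t) by ring.
  have -> : t ^+ 3 = t * (t * t) by ring.
  apply: ltr_pM => //; first by rewrite mulr_ge0 ?addr_ge0 // ltW.
    by rewrite mulr_ge0 // ltW.
  by rewrite ltr_pM2r.
have : (a + b + 1) * D ^+ 2 * t <= D ^+ 2 * a * t + D ^+ 2 * b * t.
  by apply: le_trans (ltW h3) (le_trans h _); rewrite lerD.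
have -> : (a + b + 1) * D ^+ 2 * t = D ^+ 2 * a * t + D ^+ 2 * b * t + D ^+ 2 * t by ring.
by rewrite gerDl leNgt mulr_gt0 // exprn_gt0.
Qed.

Lemma xbound (A B D x y M : int) : 0 < D -> 0 <= M ->
  y ^+ 2 = x ^+ 3 + D ^+ 2 * A * x + D ^+ 3 * B -> x <= M * D ->
  `|x| <= (M + `|A| + `|B| + 1) * D.
Proof.
move=> D0 M0 hc hx.
have hA := normr_ge0 A. have hB := normr_ge0 B.
case: (lerP 0 x) => x0.
  rewrite ger0_norm //; apply: (le_trans hx); rewrite ler_wpM2r ?(ltW D0) //.
  by rewrite -!addrA lerDl !addr_ge0.
rewrite ltr0_norm //.
have hn : - x <= (`|A| + `|B| + 1) * D.
  apply: xneg => //.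
  have f1 : D ^+ 2 * A * x <= D ^+ 2 * `|A| * (- x).
    rewrite -subr_le0.
    have -> : D ^+ 2 * A * x - D ^+ 2 * `|A| * (- x) = (D ^+ 2 * (A + `|A|)) * x by ring.
    apply: mulr_ge0_le0; last exact: ltW.
    have hAA : 0 <= A + `|A| by have := ler_norm (- A); rewrite normrN => h; lra.
    by rewrite mulr_ge0 ?exprn_ge0 ?(ltW D0).
  have f2 : D ^+ 3 * B <= D ^+ 3 * `|B|.
    by rewrite ler_wpM2l ?exprn_ge0 ?(ltW D0) // ler_norm.
  have f3 : 0 <= y ^+ 2 by rewrite sqr_ge0.
  have f4 : (- x) ^+ 3 = - (x ^+ 3) by ring.
  rewrite f4; lra.
apply: (le_trans hn); rewrite ler_wpM2r ?(ltW D0) // -!addrA lerDr.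
by [].
Qed.

Lemma iter_inv (R : realType) (A B D x y : int) : 0 < D ->
  y ^+ 2 = x ^+ 3 + D ^+ 2 * A * x + D ^+ 3 * B ->
  forall n : nat,
  match iter n (ec_double (D ^+ 2 * A)%:~R (D ^+ 3 * B)%:~R) (Some (x%:~R, y%:~R)) with
  | None => True
  | Some (xr, yr) =>
      yr ^+ 2 = xr ^+ 3 + (D ^+ 2 * A)%:~R * xr + (D ^+ 3 * B)%:~R /\
      hh R (xr / D%:~R) + ln ((Cst A B)%:~R : R) / 3 <=
        (4 : R) ^+ n * (hh R (x%:~R / D%:~R) + ln ((Cst A B)%:~R : R) / 3)
  end.
Proof.
move=> D0 hc; elim => [|n IH] /=.
  split; last by rewrite expr0 mul1r.
  have := congr1 (fun z : int => (z%:~R : rat)) hc => /=.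
  rewrite rmorphXn => ->; rewrite rmorphD rmorphD /= rmorphXn (intrM _ (D ^+ 2 * A) x).
  done.
move: IH; case: (iter n _ _) => [[xr yr]|] //= [hy hb].
case: eqP => [//|/eqP y0] /=.
split; first exact: double_step.
have Dn0 : D != 0 by rewrite gt_eqF.
have hs := @step_hh R A B D xr yr Dn0 y0 hy.
rewrite [(4 : R) ^+ n.+1]exprS -mulrA.
set c := ln ((Cst A B)%:~R : R) in hs hb *.
apply: (le_trans (y := 4 * (hh R (xr / D%:~R) + c / 3))); last first.
  by rewrite ler_wpM2l.
have c0 : 0 <= c by rewrite /c ln_ge0 // ler1z -gtz0_ge1 Cst_gt0.
lra.
Qed.

Lemma seq_bound (R : realType) (A B D x y : int) : 0 < D ->
  y ^+ 2 = x ^+ 3 + D ^+ 2 * A * x + D ^+ 3 * B ->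
  forall n : nat,
  height_x R (iter n (ec_double (D ^+ 2 * A)%:~R (D ^+ 3 * B)%:~R) (Some (x%:~R, y%:~R)))
    / 4%:R ^+ n <=
  (hh R (x%:~R / D%:~R) + ln ((Cst A B)%:~R : R) / 3) + ln (D%:~R : R) * (4^-1) ^+ n.
Proof.
move=> D0 hc n.
have := @iter_inv R A B D x y D0 hc n.
set T := hh R (x%:~R / D%:~R) + ln ((Cst A B)%:~R : R) / 3.
have c0 : 0 <= ln ((Cst A B)%:~R : R) by rewrite ln_ge0 // ler1z -gtz0_ge1 Cst_gt0.
have T0 : 0 <= T by rewrite /T addr_ge0 ?hh_ge0 // divr_ge0.
have lD : 0 <= ln (D%:~R : R) by rewrite ln_ge0 // ler1z -gtz0_ge1.
have p4 : 0 < (4 : R) ^+ n by rewrite exprn_gt0.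
have e : T + ln (D%:~R : R) * (4^-1) ^+ n = (4 ^+ n * T + ln (D%:~R : R)) / 4 ^+ n.
  rewrite exprVn; field; exact: lt0r_neq0.
case: (iter n _ _) => [[xr yr]|] /= ; last first.
  by move=> _; rewrite mul0r addr_ge0 // mulr_ge0 // exprn_ge0 // invr_ge0.
move=> [_ hb].
rewrite e ler_pM2r ?invr_gt0 //.
have h1 := @hh_mulD R D xr D0.
change (hh R xr <= 4 ^+ n * T + ln (D%:~R : R)).
lra.
Qed.

Theorem lemma6p1 (R : realType) (A B : int) (M : nat) :
  4 * A ^+ 3 + 27 * B ^+ 2 != 0 ->
  (0 < M)%N ->
  10 * Num.sqrt `|A%:~R : R| <= M%:R ->
  5 * powR `|B%:~R : R| (3%:R)^-1 <= M%:R ->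
  exists D0 : int,
    forall D : int, squarefree_int D -> D0 <= D ->
    forall x y : int,
      y ^+ 2 = x ^+ 3 + D ^+ 2 * A * x + D ^+ 3 * B ->
      x <= M%:Z * D ->
      canonical_height R ((D ^+ 2 * A)%:~R) ((D ^+ 3 * B)%:~R)
          (Some (x%:~R, y%:~R)) < 3%:R / 2%:R * ln (D%:~R : R).
Proof.
move=> _ _ _ _.
set C := Cst A B.
set K : int := M%:Z + `|A| + `|B| + 1.
have C0 : 0 < C by exact: Cst_gt0.
have K0 : 0 < K by rewrite /K ltr_wpDl // !addr_ge0.
exists (K ^+ 2 * C + 2) => D _ hD x y hc hx.
have KC0 : 0 < K ^+ 2 * C by rewrite mulr_gt0 // exprn_gt0.
have D0 : 0 < D by apply: lt_le_trans hD; rewrite addr_gt0.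
have M0 : 0 <= M%:Z by [].
have hxK := @xbound A B D x y M%:Z D0 M0 hc hx.
set T := hh R (x%:~R / D%:~R) + ln (C%:~R : R) / 3.
have c0 : 0 <= ln (C%:~R : R) by rewrite ln_ge0 // ler1z -gtz0_ge1.
have T0 : 0 <= T by rewrite /T addr_ge0 ?hh_ge0 // divr_ge0.
have hT : canonical_height R ((D ^+ 2 * A)%:~R) ((D ^+ 3 * B)%:~R)
          (Some (x%:~R, y%:~R)) <= T.
  by apply: lim_bound T0 => n; apply: seq_bound.
apply: (le_lt_trans hT).
have h0 : hh R (x%:~R / D%:~R) <= ln (K%:~R : R) + ln (D%:~R : R).
  rewrite -ln_intM //; apply: ln_int_le; first exact: Hq_gt0.
  apply: (le_trans (Hq_div _ _ (lt0r_neq0 D0))).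
  rewrite ge_max hxK /= gtr0_norm // ler_peMl // ?(ltW D0) //.
have h1 : ln ((K ^+ 2 * C)%:~R : R) < ln (D%:~R : R).
  rewrite ltr_ln ?posrE ?ltr0z // ?ltr_int //.
  by apply: lt_le_trans hD; rewrite ltrDl.
move: h1; rewrite ln_intM ?exprn_gt0 // ln_intX // => h1.
rewrite /T.
have e2 : ln (K%:~R : R) *+ 2 = 2 * ln (K%:~R : R) by rewrite mulr_natl.
rewrite e2 in h1.
lra.
Qed.
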